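(* Let $\epsilon>0$ and $R\ge 0$, and set $\Lambda(\epsilon,R)=\frac{4}{\epsilon}+2R$. Let $[v_1v_2]$ be a geodesic segment in $\mathbb{H}^n$ with midpoint $m$, and let $s$ be an isometric involution of $\mathbb{H}^n$ such that $d(v_1,s(v_1))\le R$ and $d(v_2,s(v_2))\le R$. If $d(v_1,v_2)\ge \Lambda(\epsilon,R)$, then $d(m,s(m))\le\epsilon$.
   Context: $\mathbb{H}^n$ is real hyperbolic $n$-space with its hyperbolic metric $d$; an isometric involution is an isometry $s$ with $s^2=\mathrm{id}$. *)

(* Defs.v *)
From Stdlib Require Import Reals.
Open Scope R_scope.

Fixpoint sumR (f : nat -> R) (k : nat) : R :=
  match k with O => 0 | S k' => sumR f k' + f k' end.

Definition mink (n : nat) (x y : nat -> R) : R :=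
  - (x 0%nat * y 0%nat) + sumR (fun i => x (S i) * y (S i)) n.

(* upper sheet of the hyperboloid; coordinates beyond n are fixed to 0
   so that each point of H^n has a unique representative *)
Definition on_hyperboloid (n : nat) (x : nat -> R) : Prop :=
  mink n x x = -1 /\ 0 < x 0%nat /\ (forall k, (n < k)%nat -> x k = 0).

Definition Hn (n : nat) : Type := { x : nat -> R | on_hyperboloid n x }.

Definition arcosh (t : R) : R := ln (t + sqrt (t * t - 1)).

Definition hdist {n : nat} (x y : Hn n) : R :=
  arcosh (- mink n (proj1_sig x) (proj1_sig y)).

Definition is_isometry {n : nat} (s : Hn n -> Hn n) : Prop :=
  forall x y, hdist (s x) (s y) = hdist x y.

Definition is_involution {n : nat} (s : Hn n -> Hn n) : Prop :=
  forall x, s (s x) = x.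

(* m is the midpoint of the geodesic segment [v1 v2]
   (H^n is uniquely geodesic, so this determines m) *)
Definition is_midpoint {n : nat} (v1 v2 m : Hn n) : Prop :=
  hdist v1 m = hdist v1 v2 / 2 /\ hdist m v2 = hdist v1 v2 / 2.

Definition Lambda (eps R0 : R) : R := 4 / eps + 2 * R0.

(* Main.v *)
Require Import Defs.
From Stdlib Require Import Reals Lra Lia Psatz.
Open Scope R_scope.

Lemma sumR_ext f g k : (forall i, (i < k)%nat -> f i = g i) -> sumR f k = sumR g k.
Proof. induction k; simpl; intros H; [reflexivity|]. rewrite IHk by (intros; apply H; lia). rewrite H by lia. reflexivity. Qed.

Lemma sumR_lin a b f g k : sumR (fun i => a * f i + b * g i) k = a * sumR f k + b * sumR g k.
Proof. induction k; simpl; [ring|]. rewrite IHk. ring. Qed.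

Lemma sumR_nonneg f k : (forall i, 0 <= f i) -> 0 <= sumR f k.
Proof. intros H; induction k; simpl; [lra|]. specialize (H k). lra. Qed.

Lemma cs_step S X Y a b : 0 <= X -> 0 <= Y -> S*S <= X*Y ->
  (S + a*b)*(S+a*b) <= (X + a*a)*(Y+b*b).
Proof.
  intros HX HY H.
  assert (2*S*a*b <= X*(b*b) + a*a*Y).
  { destruct (Req_dec X 0) as [E|E].
    - subst. assert (S = 0) by nra. subst. nra.
    - assert (0 < X) by lra.
      assert (X*(X*(b*b) + a*a*Y - 2*S*a*b) = (X*b - S*a)*(X*b-S*a) + a*a*(X*Y - S*S)) by ring.
      assert (0 <= (X*b - S*a)*(X*b-S*a) + a*a*(X*Y - S*S)).
      { apply Rplus_le_le_0_compat; [apply Rle_0_sqr|apply Rmult_le_pos; [apply Rle_0_sqr|lra]]. }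
      assert (0 <= X*(b*b) + a*a*Y - 2*S*a*b).
      { apply (Rmult_le_reg_l X); lra. }
      lra. }
  nra.
Qed.

Lemma cs f g k : sumR (fun i => f i * g i) k * sumR (fun i => f i * g i) k <=
  sumR (fun i => f i * f i) k * sumR (fun i => g i * g i) k.
Proof.
  induction k; simpl; [lra|].
  apply cs_step; auto; apply sumR_nonneg; intros; nra.
Qed.

Definition sp n (x y : nat -> R) := sumR (fun i => x (S i) * y (S i)) n.

Lemma mink_sp n x y : mink n x y = - (x 0%nat * y 0%nat) + sp n x y.
Proof. reflexivity. Qed.

Lemma sp_cs n x y : sp n x y * sp n x y <= sp n x x * sp n y y.
Proof. apply (cs (fun i => x (S i)) (fun i => y (S i))). Qed.

Lemma sp_nonneg n x : 0 <= sp n x x.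
Proof. apply sumR_nonneg; intros; nra. Qed.

Lemma sp_am n x y : 2 * sp n x y <= sp n x x + sp n y y.
Proof.
  assert (H := sp_nonneg n (fun k => x k - y k)).
  unfold sp in *.
  rewrite (sumR_ext _ (fun i => 1 * (x (S i) * x (S i) - 2 * (x (S i) * y (S i))) + 1 * (y (S i) * y (S i))) ) in H by (intros; ring).
  rewrite sumR_lin in H.
  rewrite (sumR_ext _ (fun i => 1 * (x (S i) * x (S i)) + (-2) * (x (S i) * y (S i))) ) in H by (intros; ring).
  rewrite sumR_lin in H. lra.
Qed.

Lemma sp_sym n x y : sp n x y = sp n y x.
Proof. unfold sp. apply sumR_ext; intros; ring. Qed.

Lemma mink_sym n x y : mink n x y = mink n y x.
Proof. rewrite !mink_sp, sp_sym. ring. Qed.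

Lemma mink_lin n a b x y z : mink n (fun k => a * x k + b * y k) z = a * mink n x z + b * mink n y z.
Proof.
  rewrite !mink_sp. unfold sp.
  rewrite (sumR_ext _ (fun i => a * (x (S i) * z (S i)) + b * (y (S i) * z (S i)))) by (intros; ring).
  rewrite sumR_lin. ring.
Qed.

Lemma revcs n x y A : 0 < x 0%nat -> 0 < y 0%nat -> 0 <= A ->
  mink n x x = - A -> mink n y y = - A -> mink n x y <= - A.
Proof.
  rewrite !mink_sp. intros Hx Hy HA Ex Ey.
  assert (C := sp_cs n x y). assert (M := sp_am n x y).
  assert (X0 := sp_nonneg n x). assert (Y0 := sp_nonneg n y).
  set (S := sp n x y) in *. set (X := sp n x x) in *. set (Y := sp n y y) in *.
  assert (x 0%nat * x 0%nat = X + A) by lra.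
  assert (y 0%nat * y 0%nat = Y + A) by lra.
  destruct (Rle_dec (S + A) 0). { nra. }
  assert (E: (x 0%nat * y 0%nat) * (x 0%nat * y 0%nat) = (X+A)*(Y+A)).
  { transitivity ((x 0%nat * x 0%nat) * (y 0%nat * y 0%nat)); [ring|]. congruence. }
  assert (A*(2*S) <= A*(X+Y)) by (apply Rmult_le_compat_l; lra).
  assert ((x 0%nat * y 0%nat) * (x 0%nat * y 0%nat) >= (S + A) * (S + A)) by nra.
  assert (0 < x 0%nat * y 0%nat) by (apply Rmult_lt_0_compat; lra).
  assert (x 0%nat * y 0%nat >= S + A).
  { destruct (Rge_dec (x 0%nat * y 0%nat) (S + A)); auto. nra. }
  lra.
Qed.

Lemma null_zero n x w : mink n x x < 0 -> mink n w x = 0 -> mink n w w = 0 ->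
  forall y, mink n w y = 0.
Proof.
  rewrite !mink_sp. intros Hx Hwx Hww y.
  assert (C1 := sp_cs n w x).
  assert (X0 := sp_nonneg n x).
  assert (W0 : w 0%nat = 0).
  { destruct (Req_dec (w 0%nat) 0) as [|E]; auto.
    assert (w 0%nat * w 0%nat > 0) by (apply Rmult_gt_0_lt_compat || nra; nra).
    exfalso. nra. }
  assert (sp n w w = 0) by (rewrite W0 in Hww; lra).
  assert (C2 := sp_cs n w y). assert (Y0 := sp_nonneg n y).
  rewrite mink_sp, W0. assert (sp n w y = 0) by nra. lra.
Qed.

Lemma exp_half x : exp x = exp (x/2) * exp (x/2).
Proof. rewrite <- exp_plus. f_equal. field. Qed.

Lemma cosh_sq x : cosh x - 1 = (exp (x/2) - / exp (x/2)) * (exp (x/2) - / exp (x/2)) / 2.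
Proof.
  unfold cosh. rewrite exp_Ropp, (exp_half x). assert (exp (x/2) > 0) by apply exp_pos.
  field. lra.
Qed.

Lemma cosh_double y : cosh (2*y) = 2 * cosh y * cosh y - 1.
Proof.
  unfold cosh. replace (2*y) with (y+y) by ring. rewrite !exp_Ropp, exp_plus.
  assert (exp y > 0) by apply exp_pos. field. lra.
Qed.

Lemma cosh_ge x : exp x / 2 <= cosh x.
Proof. unfold cosh. assert (exp (-x) > 0) by apply exp_pos. lra. Qed.

Lemma cosh_mono_lt a b : 0 <= a -> a < b -> cosh a < cosh b.
Proof.
  intros Ha Hab. unfold cosh. rewrite !exp_Ropp.
  assert (1 <= exp a) by (rewrite <- exp_0; destruct Ha as [Ha|<-]; [left; apply exp_increasing; auto| lra]).
  assert (exp a < exp b) by (apply exp_increasing; auto).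
  assert (/ exp b - / exp a = (exp a - exp b) / (exp a * exp b)) by (field; lra).
  assert ((exp b - exp a) / (exp a * exp b) < exp b - exp a).
  { assert (/ (exp a * exp b) < 1). { rewrite <- Rinv_1. apply Rinv_lt_contravar; nra. }
    unfold Rdiv. assert (0 < exp b - exp a) by lra.
    pattern (exp b - exp a) at 2; rewrite <- Rmult_1_r. apply Rmult_lt_compat_l; lra. }
  lra.
Qed.

Lemma cosh_mono_le a b : 0 <= a -> a <= b -> cosh a <= cosh b.
Proof. intros Ha [H|<-]; [left; apply cosh_mono_lt; auto| lra]. Qed.

Lemma final_est eps R0 L X Y : 0 < eps -> 0 <= R0 -> 4/eps + 2*R0 <= L ->
  X <= cosh R0 -> Y <= cosh R0 ->
  (2*X + 2*Y + 4 * cosh (L/2) * cosh (L/2) - 4) / (4 * cosh (L/2) * cosh (L/2)) <= cosh eps.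
Proof.
  intros He HR HL HX HY.
  set (h := cosh (L/2)).
  set (P := exp (L/2)). set (Q := exp (R0/2)). set (a := exp (eps/2)). set (G := exp (2/eps)).
  assert (HP : P/2 <= h) by apply cosh_ge.
  assert (P > 0) by apply exp_pos. assert (Q > 0) by apply exp_pos.
  assert (Q1 : 1 <= Q) by (unfold Q; rewrite <- exp_0; apply exp_le_3 || (destruct HR as [HR|HR]; [left; apply exp_increasing; lra| rewrite <- HR; replace (0/2) with 0 by field; lra])).
  assert (HG : 1 + 2/eps < G) by (apply exp_ineq1; assert (0 < 2/eps) by (apply Rdiv_lt_0_compat; lra); lra).
  assert (Ha : 1 + eps/2 < a) by (apply exp_ineq1; lra).
  assert (HPG : G * (Q * Q) <= P).
  { unfold G, Q, P. rewrite <- !exp_plus. destruct (Rle_lt_or_eq_dec (2/eps + (R0/2 + R0/2)) (L/2)) as [E|E].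
    - unfold Rdiv in *. lra.
    - left. apply exp_increasing. exact E.
    - rewrite E. lra. }
  assert (HcR : cosh R0 - 1 <= Q*Q/2).
  { rewrite cosh_sq. fold Q. assert (0 < /Q) by (apply Rinv_0_lt_compat; lra).
    assert (/Q <= 1) by (rewrite <- Rinv_1; apply Rinv_le_contravar; lra). nra. }
  assert (Hce : cosh eps - 1 = (a - /a)*(a - /a)/2) by (rewrite cosh_sq; reflexivity).
  remember (1 + eps/2) as b eqn:Hbd.
  assert (Hab : b - /b <= a - /a).
  { assert (a > 0) by (unfold a; apply exp_pos). assert (/a < /b) by (assert (0 < b) by lra; apply Rinv_lt_contravar; [apply Rmult_lt_0_compat|]; lra). lra. }
  assert (Hb : b - /b = eps * (1 + eps/4) / (1 + eps/2)) by (rewrite Hbd; field; lra).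
  assert (HG0 : 0 < G) by (unfold G; apply exp_pos).
  assert (H2G : 2/G <= eps / (1 + eps/2)).
  { apply (Rmult_le_reg_r (G * (1+eps/2))); [nra|].
    replace (2/G * (G*(1+eps/2))) with (2 + eps) by (field; lra).
    replace (eps/(1+eps/2) * (G*(1+eps/2))) with (eps * G) by (field; lra).
    apply (Rmult_lt_compat_l eps) in HG; [|lra].
    replace (eps * (1+2/eps)) with (eps + 2) in HG by (field; lra). lra. }
  assert (eps / (1+eps/2) <= eps * (1+eps/4)/(1+eps/2)).
  { unfold Rdiv. apply Rmult_le_compat_r; [left; apply Rinv_0_lt_compat; lra| nra]. }
  assert (Hs : 2/G <= a - /a) by lra.
  assert (0 < 2/G) by (apply Rdiv_lt_0_compat; lra).
  assert (Hsq : (2/G)*(2/G) <= (a - /a)*(a-/a)) by nra.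
  (* (cosh R0 - 1)/h^2 <= 2/G^2 *)
  assert (h > 0) by lra.
  assert (HQP : Q*Q <= (2/G)*(2/G) * (h*h)).
  { assert (G*(Q*Q)/2 <= h) by lra.
    assert ((G*(Q*Q)/2)*(G*(Q*Q)/2) <= h*h) by (apply Rmult_le_compat; nra).
    assert ((2/G)*(2/G) * (h*h) >= (2/G)*(2/G)*((G*(Q*Q)/2)*(G*(Q*Q)/2))) by (apply Rle_ge, Rmult_le_compat_l; nra).
    replace ((2/G)*(2/G)*((G*(Q*Q)/2)*(G*(Q*Q)/2))) with (Q*Q*(Q*Q)) in * by (field; lra).
    assert (Q*Q <= Q*Q*(Q*Q)) by (assert (1 <= Q*Q) by nra; pattern (Q*Q) at 1; rewrite <- Rmult_1_r; apply Rmult_le_compat_l; nra). lra. }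
  assert (Hf : Q*Q <= (a - /a)*(a-/a) * (h*h)) by (apply Rle_trans with (1 := HQP); apply Rmult_le_compat_r; nra).
  apply (Rmult_le_reg_r (4*h*h)); [nra|].
  unfold Rdiv at 1. rewrite Rmult_assoc, Rinv_l by nra.
  nra.
Qed.

Definition pt {n} (p : Hn n) : nat -> R := proj1_sig p.

Lemma pt_mink {n} (p : Hn n) : mink n (pt p) (pt p) = -1.
Proof. exact (proj1 (proj2_sig p)). Qed.

Lemma pt_pos {n} (p : Hn n) : 0 < pt p 0%nat.
Proof. exact (proj1 (proj2 (proj2_sig p))). Qed.

Lemma K_ge1 {n} (p q : Hn n) : 1 <= - mink n (pt p) (pt q).
Proof.
  assert (H := revcs n (pt p) (pt q) 1 (pt_pos p) (pt_pos q) ltac:(lra) (pt_mink p) (pt_mink q)). lra.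
Qed.

Lemma hd_cosh {n} (p q : Hn n) : cosh (hdist p q) = - mink n (pt p) (pt q) /\ 0 <= hdist p q.
Proof.
  unfold hdist, arcosh. fold (pt p). fold (pt q).
  assert (Ht := K_ge1 p q).
  set (t := - mink n (pt p) (pt q)) in *.
  assert (0 <= t*t - 1) by nra.
  set (r := sqrt (t*t-1)).
  assert (Hr : 0 <= r) by apply sqrt_pos.
  assert (Hr2 : r * r = t*t - 1) by (apply sqrt_sqrt; auto).
  assert (He : 0 < t + r) by lra.
  split.
  - unfold cosh. rewrite exp_Ropp, exp_ln by auto.
    assert (/ (t + r) = t - r) by (field_simplify_eq; [nra| lra]).
    rewrite H0. lra.
  - rewrite <- ln_1. apply Rlt_le_weak_compat || (destruct (Rle_lt_or_eq_dec 1 (t+r)) as [E|E]; [lra|left; apply ln_increasing; lra| rewrite E; lra]).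
Qed.

Lemma iso_mink {n} (s : Hn n -> Hn n) : is_isometry s ->
  forall p q, mink n (pt (s p)) (pt (s q)) = mink n (pt p) (pt q).
Proof.
  intros Hs p q. destruct (hd_cosh (s p) (s q)) as [E1 _]. destruct (hd_cosh p q) as [E2 _].
  rewrite Hs in E1. lra.
Qed.

Lemma mid_lin {n} (p q r : Hn n) h : 0 < h ->
  mink n (pt p) (pt r) = -h -> mink n (pt r) (pt q) = -h ->
  mink n (pt p) (pt q) = -(2*h*h - 1) ->
  forall y, mink n (pt r) y = /(2*h) * mink n (pt p) y + /(2*h) * mink n (pt q) y.
Proof.
  intros Hh Hpr Hrq Hpq y.
  set (c := /(2*h)).
  set (u := fun k => c * pt p k + c * pt q k).
  set (w := fun k => 1 * pt r k + (-1) * u k).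
  assert (Hpp := pt_mink p). assert (Hqq := pt_mink q). assert (Hrr := pt_mink r).
  assert (Hur : mink n u (pt r) = -1).
  { unfold u. rewrite mink_lin, (mink_sym n (pt q)). rewrite Hpr, Hrq. unfold c. field. lra. }
  assert (Huu : mink n u u = -1).
  { unfold u at 1. rewrite mink_lin. rewrite (mink_sym n (pt p)), (mink_sym n (pt q)).
    unfold u. rewrite !mink_lin. rewrite Hpp, Hqq, Hpq, (mink_sym n (pt q)), Hpq.
    unfold c. field. lra. }
  assert (Hwr : mink n w (pt r) = 0).
  { unfold w. rewrite mink_lin, Hur, Hrr. ring. }
  assert (Hww : mink n w w = 0).
  { unfold w at 1. rewrite mink_lin. rewrite (mink_sym n (pt r)), (mink_sym n u).
    unfold w. rewrite !mink_lin. rewrite Hrr, Huu, Hur, (mink_sym n (pt r) u), Hur. ring. }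
  assert (Z := null_zero n (pt r) w ltac:(lra) Hwr Hww y).
  unfold w in Z. rewrite mink_lin in Z. unfold u in Z. rewrite mink_lin in Z. lra.
Qed.

Theorem mainTheorem4 (n : nat) (eps R0 : R) (v1 v2 m : Hn n) (s : Hn n -> Hn n) :
  0 < eps -> 0 <= R0 ->
  is_midpoint v1 v2 m ->
  is_isometry s -> is_involution s ->
  hdist v1 (s v1) <= R0 -> hdist v2 (s v2) <= R0 ->
  Lambda eps R0 <= hdist v1 v2 ->
  hdist m (s m) <= eps.
Proof.
  intros He HR [Hm1 Hm2] Hs Hinv H1 H2 HL.
  unfold Lambda in HL.
  set (L := hdist v1 v2) in *.
  set (h := cosh (L/2)).
  assert (E1 : mink n (pt v1) (pt m) = -h).
  { destruct (hd_cosh v1 m) as [C _]. rewrite Hm1 in C. fold h in C. lra. }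
  assert (E2 : mink n (pt m) (pt v2) = -h).
  { destruct (hd_cosh m v2) as [C _]. rewrite Hm2 in C. fold h in C. lra. }
  assert (E3 : mink n (pt v1) (pt v2) = -(2*h*h - 1)).
  { destruct (hd_cosh v1 v2) as [C _]. fold L in C.
    replace L with (2*(L/2)) in C by field. rewrite cosh_double in C. fold h in C. lra. }
  assert (Hh : 1 <= h) by (assert (K := K_ge1 v1 m); lra).
  assert (Lm := mid_lin v1 v2 m h ltac:(lra) E1 E2 E3).
  assert (Is := iso_mink s Hs).
  assert (Lsm := mid_lin (s v1) (s v2) (s m) h ltac:(lra)
                   ltac:(rewrite Is; exact E1) ltac:(rewrite Is; exact E2) ltac:(rewrite Is; exact E3)).
  set (c := /(2*h)) in *.
  set (X := - mink n (pt (s v1)) (pt v1)).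
  set (Y := - mink n (pt (s v2)) (pt v2)).
  set (z := - mink n (pt (s v2)) (pt v1)).
  assert (Ez : mink n (pt (s v1)) (pt v2) = -z).
  { unfold z. rewrite <- (Hinv v2) at 1. rewrite Is, mink_sym. ring. }
  assert (Hk : - mink n (pt m) (pt (s m)) = c*c*(X + Y + 2*z)).
  { rewrite Lm, (mink_sym n (pt v1)), (mink_sym n (pt v2)), !Lsm, Ez. unfold X, Y, z. ring. }
  (* reverse Cauchy-Schwarz *)
  set (p := fun k => 1 * pt v1 k + 1 * pt (s v2) k).
  set (p' := fun k => 1 * pt (s v1) k + 1 * pt v2 k).
  assert (Hz1 : 1 <= z) by (apply K_ge1).
  assert (Epp : mink n p p = -(2 + 2*z)).
  { unfold p at 1. rewrite mink_lin, (mink_sym n (pt v1)), (mink_sym n (pt (s v2))).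
    unfold p. rewrite !mink_lin, !pt_mink. rewrite (mink_sym n (pt v1)). unfold z. ring. }
  assert (Ep'p' : mink n p' p' = -(2 + 2*z)).
  { unfold p' at 1. rewrite mink_lin, (mink_sym n (pt (s v1))), (mink_sym n (pt v2)).
    unfold p'. rewrite !mink_lin, !pt_mink. rewrite (mink_sym n (pt v2)), Ez. ring. }
  assert (Rc := revcs n p p' (2 + 2*z)
     ltac:(unfold p; assert (A1 := pt_pos v1); assert (A2 := pt_pos (s v2)); lra)
     ltac:(unfold p'; assert (A1 := pt_pos (s v1)); assert (A2 := pt_pos v2); lra)
     ltac:(lra) Epp Ep'p').
  assert (Epp' : mink n p p' = -X - (2*h*h-1) - (2*h*h-1) - Y).
  { unfold p. rewrite mink_lin, (mink_sym n (pt v1) p'), (mink_sym n (pt (s v2)) p').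
    unfold p'. rewrite !mink_lin.
    rewrite (mink_sym n (pt v2) (pt v1)), E3, Is, E3.
    rewrite (mink_sym n (pt v2) (pt (s v2))). unfold X, Y. ring. }
  assert (Hzb : X + Y + 2*z <= 2*X + 2*Y + 4*h*h - 4) by lra.
  assert (HX : X <= cosh R0).
  { destruct (hd_cosh v1 (s v1)) as [C D]. unfold X. rewrite mink_sym, <- C.
    apply cosh_mono_le; auto. }
  assert (HY : Y <= cosh R0).
  { destruct (hd_cosh v2 (s v2)) as [C D]. unfold Y. rewrite mink_sym, <- C.
    apply cosh_mono_le; auto. }
  assert (F := final_est eps R0 L X Y He HR HL HX HY). fold h in F.
  assert (Hk2 : - mink n (pt m) (pt (s m)) <= cosh eps).
  { rewrite Hk. apply Rle_trans with (2 := F).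
    replace ((2 * X + 2 * Y + 4 * h * h - 4) / (4 * h * h)) with (c*c*(2 * X + 2 * Y + 4 * h * h - 4))
      by (unfold c; field; lra).
    apply Rmult_le_compat_l; [nra| lra]. }
  destruct (hd_cosh m (s m)) as [C D].
  destruct (Rle_dec (hdist m (s m)) eps) as [|N]; auto.
  exfalso. assert (cosh eps < cosh (hdist m (s m))) by (apply cosh_mono_lt; lra). lra.
Qed.
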